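(* Given the ability to perform incoherent unitaries and $k$ Hadamard gates (or generalised controlled Hadamards), computational basis measurements and classical control, then even with access to an arbitrary ancillary state $|\gamma\rangle$, it is impossible to implement $n$ Hadamards $H^{\otimes n}$ exactly (deterministically) for $n>k$.
   Context: Fix the computational basis. A unitary is incoherent if it has the form $U=\sum_x e^{i\theta_x}|\pi(x)\rangle\langle x|$ for real $\theta_x$ and a permutation $\pi$. A generalised controlled-$W$ gate is $\sum_{x\in S}|x\rangle\langle x|\otimes W+\sum_{y\in S^c}|y\rangle\langle y|\otimes I$ for some subset $S$ of bitstrings. Such operations are modelled as channels $\rho\mapsto\mathrm{Tr}_2\big(U(\rho\otimes|\gamma\rangle\langle\gamma|)U^\dagger\big)$ with $U=U_kV_k\cdots U_1V_1U_0$, where the $U_i$ are incoherent unitaries and the $V_i$ are (generalised controlled) Hadamards. *)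

(* Defs.v *)
(* Complex amplitudes live in an arbitrary
   numClosedFieldType C (e.g. algC, or complex numbers R[i]). *)
From HB Require Import structures.
From mathcomp Require Import all_boot all_order all_algebra all_fingroup.
Set Implicit Arguments. Unset Strict Implicit. Unset Printing Implicit Defensive.
Import Order.TTheory GRing.Theory Num.Theory.
Local Open Scope ring_scope.

Section Quantum.
Variable C : numClosedFieldType.

(* Operators on the Hilbert space spanned by the computational basis T,
   given by their matrix entries <x|A|y> = A x y. *)
Definition op (T : finType) := T -> T -> C.
Definition mulop (T : finType) (A B : op T) : op T :=
  fun x y => \sum_(z : T) A x z * B z y.
Definition adj (T : finType) (A : op T) : op T := fun x y => (A y x)^*.

Definition bits (n : nat) := {ffun 'I_n -> bool}.
(* basis of n system qubits together with m ancilla qubits *)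
Definition qreg (n m : nat) := (bits n * bits m)%type.
Definition qubit (n m : nat) := ('I_n + 'I_m)%type.

Definition qget n m (q : qubit n m) (a : qreg n m) : bool :=
  match q with inl i => a.1 i | inr j => a.2 j end.
Definition qset n m (q : qubit n m) (b : bool) (a : qreg n m) : qreg n m :=
  match q with
  | inl i => ([ffun i' => if i' == i then b else a.1 i'], a.2)
  | inr j => (a.1, [ffun j' => if j' == j then b else a.2 j'])
  end.

Definition hadamard_entry (u v : bool) : C := (-1) ^+ (u && v) / sqrtC 2.

(* Incoherent unitary: U = sum_x e^{i theta_x} |pi x><x|, phases written as
   unit-modulus scalars c x. *)
Definition incoherent (T : finType) (U : op T) : Prop :=
  exists (pi : {perm T}) (c : T -> C),
    (forall x, `|c x| = 1) /\
    (forall a b, U a b = if a == pi b then c b else 0).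

(* Generalised controlled Hadamard with target qubit q, controlled on a set
   of bitstrings of the remaining qubits.  A bitstring of the remaining
   qubits is encoded as the joint bitstring with qubit q cleared; the control
   condition for a basis state a is [qset q false a \in S].  S = setT gives
   the plain Hadamard on qubit q. *)
Definition gen_ctrl_had n m (q : qubit n m) (S : {set qreg n m}) : op (qreg n m) :=
  fun a b =>
    if qset q false a \in S then
      (if qset q false a == qset q false b
       then hadamard_entry (qget q a) (qget q b) else 0)
    else (a == b)%:R.

(* circuit n m k U : U = U_k V_k ... U_1 V_1 U_0 with U_i incoherent and
   V_i generalised controlled Hadamards, on n + m qubits. *)
Inductive circuit (n m : nat) : nat -> op (qreg n m) -> Prop :=
  | circuit0 (U : op (qreg n m)) : incoherent U -> @circuit n m 0 U
  | circuitS (k : nat) (U' Ui : op (qreg n m)) (q : qubit n m)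
      (S : {set qreg n m}) :
      @circuit n m k U' -> incoherent Ui ->
      @circuit n m k.+1 (mulop Ui (mulop (gen_ctrl_had q S) U')).

Definition tens_op n m (rho : op (bits n)) (sigma : op (bits m)) : op (qreg n m) :=
  fun a b => rho a.1 b.1 * sigma a.2 b.2.
Definition ptrace2 n m (M : op (qreg n m)) : op (bits n) :=
  fun x y => \sum_(e : bits m) M (x, e) (y, e).
Definition proj (T : finType) (g : T -> C) : op T := fun e f => g e * (g f)^*.
Definition normalized (T : finType) (g : T -> C) : Prop :=
  \sum_(e : T) `|g e| ^+ 2 = 1.

Definition channel n m (U : op (qreg n m)) (g : bits m -> C) (rho : op (bits n))
  : op (bits n) :=
  ptrace2 (mulop U (mulop (tens_op rho (proj g)) (adj U))).

Definition hadn n : op (bits n) :=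
  fun x y => \prod_(i < n) hadamard_entry (x i) (y i).
Definition hadn_channel n (rho : op (bits n)) : op (bits n) :=
  mulop (@hadn n) (mulop rho (adj (@hadn n))).

End Quantum.

(* Main.v *)
Require Import Defs.
From HB Require Import structures.
From mathcomp Require Import all_boot all_order all_algebra all_fingroup.
From mathcomp Require Import ring.
From Stdlib Require Import FunctionalExtensionality.
Import GRing.Theory Num.Theory.
Set Implicit Arguments. Unset Strict Implicit. Unset Printing Implicit Defensive.
Local Open Scope ring_scope.

Lemma card_bigcup_le (I T : finType) (B : {set I}) (S : I -> {set T}) :
  (#|\bigcup_(i in B) S i| <= \sum_(i in B) #|S i|)%N.
Proof.
elim/big_rec2: _ => [|i n U _ le]; first by rewrite cards0.
by rewrite (leq_trans (leq_card_setU _ U).1) ?leq_add2l.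
Qed.

Section Aux.
Variable C : numClosedFieldType.

Definition idop (T : finType) : op C T := fun a b => (a == b)%:R.
Definition supp (T : finType) (A : op C T) b := [set a | A a b != 0].
Definition colsp (T : finType) (A : op C T) s := forall b, (#|supp A b| <= s)%N.

Lemma sum_delta (T : finType) (x : T) (F : T -> C) :
  \sum_a (a == x)%:R * F a = F x.
Proof.
rewrite (bigD1 x) //= eqxx mul1r big1 ?addr0 // => a /negbTE ->; by rewrite mul0r.
Qed.

Lemma sum_delta' (T : finType) (x : T) (F : T -> C) :
  \sum_a (x == a)%:R * F a = F x.
Proof. by rewrite -(sum_delta x); apply: eq_bigr => a _; rewrite eq_sym. Qed.

Lemma sum_pair (I J : finType) (F : I * J -> C) :
  \sum_z F z = \sum_a \sum_e F (a, e).
Proof. by rewrite pair_bigA; apply: eq_bigr => -[a e]. Qed.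

Lemma mulopA (T : finType) (A B D : op C T) :
  mulop (mulop A B) D = mulop A (mulop B D).
Proof.
apply: functional_extensionality => a; apply: functional_extensionality => b.
rewrite /mulop.
under eq_bigr => z _ do rewrite mulr_suml.
rewrite exchange_big; apply: eq_bigr => w _.
by rewrite mulr_sumr; apply: eq_bigr => z _; rewrite mulrA.
Qed.

Lemma mul1op (T : finType) (A : op C T) : mulop (@idop T) A = A.
Proof.
apply: functional_extensionality => a; apply: functional_extensionality => b.
by rewrite /mulop /idop sum_delta'.
Qed.

Lemma colsp_mul (T : finType) (A B : op C T) s t :
  colsp A s -> colsp B t -> colsp (mulop A B) (s * t).
Proof.
move=> hA hB b.
have sub : supp (mulop A B) b \subset \bigcup_(z in supp B b) supp A z.
  apply/subsetP => a; rewrite inE; apply: contraR => H.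
  rewrite /mulop big1 // => z _.
  case: (eqVneq (B z b) 0) => [->|nz]; first by rewrite mulr0.
  case: (eqVneq (A a z) 0) => [->|nzA]; first by rewrite mul0r.
  by case/negP: H; apply/bigcupP; exists z; rewrite inE.
apply: (leq_trans (subset_leq_card sub)).
apply: (leq_trans (card_bigcup_le _ _)).
apply: (@leq_trans (\sum_(z in supp B b) s)); first by apply: leq_sum => z _; apply: hA.
by rewrite sum_nat_const mulnC leq_mul2l hB orbT.
Qed.

Lemma colsp_le (T : finType) (A : op C T) s s' : colsp A s -> (s <= s')%N -> colsp A s'.
Proof. by move=> h le b; apply: leq_trans (h b) le. Qed.


Lemma sum2 (T : finType) (F : T -> C) z0 z1 : z0 != z1 ->
  (forall z, z != z0 -> z != z1 -> F z = 0) -> \sum_z F z = F z0 + F z1.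
Proof.
move=> ne H; rewrite (bigD1 z0) //= (bigD1 z1) /=; last by rewrite eq_sym.
rewrite big1 ?addr0 // => z /andP [h0 h1]; exact: H.
Qed.

Section Q.
Variables (n m : nat) (q : qubit n m).

Lemma qget_set v a : qget q (qset q v a) = v.
Proof. by case: q => i /=; rewrite ffunE eqxx. Qed.

Lemma qset_set v w a : qset q v (qset q w a) = qset q v a.
Proof.
case: a => a1 a2; case: q => i /=; congr pair; apply/ffunP => j; rewrite !ffunE; by case: (j == i).
Qed.

Lemma qset_get a : qset q (qget q a) a = a.
Proof.
case: a => a1 a2; case: q => i /=; congr pair; apply/ffunP => j; rewrite !ffunE;
  by case: eqP => [->|].
Qed.

Lemma qset_eq a b : qset q false a = qset q false b -> qget q a = qget q b -> a = b.
Proof.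
move=> e1 e2; by rewrite -(qset_get a) -(qset_get b) -(qset_set _ false a) e1 e2 qset_set.
Qed.

Lemma qset_neq a : qset q false a != qset q true a.
Proof. by apply/eqP => /(congr1 (qget q)); rewrite !qget_set. Qed.

Lemma hh u w : hadamard_entry C u false * hadamard_entry C false w
   + hadamard_entry C u true * hadamard_entry C true w = (u == w)%:R.
Proof.
have s2 : sqrtC (2 : C) * sqrtC 2 = 2 by rewrite -expr2 sqrtCK.
have s0 : sqrtC (2 : C) != 0 by rewrite sqrtC_eq0 pnatr_eq0.
rewrite /hadamard_entry; case: u; case: w => /=; rewrite ?expr0 ?expr1;
  rewrite !mulf_div s2; field; rewrite ?pnatr_eq0 //.
Qed.

Local Notation G S := (@gen_ctrl_had C n m q S).

Lemma G_zero S a z : qset q false z != qset q false a -> G S a z = 0.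
Proof.
move=> ne; rewrite /gen_ctrl_had; case: ifP => _; first by rewrite eq_sym (negbTE ne).
by case: (eqVneq a z) ne => [->|]; rewrite ?eqxx.
Qed.

Lemma GG S : mulop (G S) (G S) = @idop (qreg n m).
Proof.
apply: functional_extensionality => a; apply: functional_extensionality => b.
rewrite /mulop /idop.
case ca: (qset q false a \in S); last first.
  rewrite (eq_bigr (fun z => (a == z)%:R * G S z b)); last first.
    by move=> z _; rewrite {1}/gen_ctrl_had ca.
  by rewrite sum_delta' /gen_ctrl_had ca.
rewrite (sum2 (qset_neq a)); last first.
  move=> z h0 h1; case: (eqVneq (qset q false z) (qset q false a)) => e.
    have ez : z = qset q (qget q z) a by apply: qset_eq; rewrite ?qset_set ?qget_set.
    by case: (qget q z) ez => ez; [case/eqP: h1 | case/eqP: h0].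
  by rewrite G_zero // mul0r.
have Ga v : G S a (qset q v a) = hadamard_entry C (qget q a) v.
  by rewrite /gen_ctrl_had ca qset_set eqxx qget_set.
have Gb v : G S (qset q v a) b =
   if qset q false a == qset q false b then hadamard_entry C v (qget q b) else 0.
  by rewrite /gen_ctrl_had qset_set ca qget_set.
rewrite !Ga !Gb; case: ifP => e.
  rewrite hh; case: (eqVneq a b) => [->|neab]; first by rewrite !eqxx.
  have /negbTE -> : qget q a != qget q b.
    by apply: contra neab => /eqP h; apply/eqP; exact: qset_eq (eqP e) h.
  by [].
by rewrite !mulr0 addr0; case: (eqVneq a b) e => [->|]; rewrite ?eqxx.
Qed.

Lemma colsp_G S : colsp (G S) 2.
Proof.
move=> b.
have sub : supp (G S) b \subset [set qset q false b; qset q true b].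
  apply/subsetP => a; rewrite inE => nz.
  case: (eqVneq (qset q false b) (qset q false a)) => e; last by move: nz; rewrite G_zero // eqxx.
  have ea : a = qset q (qget q a) b by apply: qset_eq; rewrite ?qset_set ?qget_set.
  rewrite ea; case: (qget q a); by rewrite !inE eqxx ?orbT.
apply: leq_trans (subset_leq_card sub) _; rewrite cards2; by case: (_ != _).
Qed.

End Q.


Lemma colsp_inc (T : finType) (U : op C T) : incoherent U -> colsp U 1.
Proof.
move=> [pi [c [hc hU]]] b.
have sub : supp U b \subset [set pi b].
  by apply/subsetP => a; rewrite /supp !inE hU; case: (a == pi b); rewrite ?eqxx.
by apply: leq_trans (subset_leq_card sub) _; rewrite cards1.
Qed.

Lemma inc_inv (T : finType) (U : op C T) : incoherent U ->
  mulop (adj U) U = @idop T /\ colsp (adj U) 1.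
Proof.
move=> [pi [c [hc hU]]]; split.
  apply: functional_extensionality => a; apply: functional_extensionality => b.
  rewrite /mulop /adj /idop.
  rewrite (eq_bigr (fun z => (z == pi a)%:R * ((c a)^* * (if z == pi b then c b else 0)))); last first.
    by move=> z _; rewrite !hU; case: (z == pi a); rewrite ?mul1r ?mul0r ?rmorph0 ?mul0r.
  rewrite sum_delta; case: (eqVneq a b) => [->|ne].
    by rewrite eqxx mulrC -normCK hc expr1n.
  by rewrite (inj_eq (@perm_inj _ pi)) (negbTE ne) mulr0.
move=> b.
have sub : supp (adj U) b \subset [set (pi^-1)%g b].
  apply/subsetP => a; rewrite /supp !inE /adj hU.
  case: (eqVneq b (pi a)) => [->|_]; first by rewrite permK eqxx.
  by rewrite rmorph0 eqxx.
by apply: leq_trans (subset_leq_card sub) _; rewrite cards1.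
Qed.

Lemma circuit_sp n m k U : @circuit C n m k U ->
  colsp U (2 ^ k) /\ exists V, mulop V U = @idop (qreg n m) /\ colsp V (2 ^ k).
Proof.
elim => [U0 inc | {}k U' Ui q S _ [spU' [V [hV spV]]] inc].
  have [h1 h2] := inc_inv inc.
  by split; [exact: colsp_inc | exists (adj U0)].
have [hW spW] := inc_inv inc.
split.
  apply: colsp_le (colsp_mul (colsp_inc inc) (colsp_mul (colsp_G q S) spU')) _.
  by rewrite mul1n expnS.
exists (mulop (mulop V (gen_ctrl_had C q S)) (adj Ui)); split.
  rewrite !mulopA -(mulopA (adj Ui) Ui) hW mul1op -(mulopA (gen_ctrl_had C q S)) GG mul1op.
  exact: hV.
apply: colsp_le (colsp_mul (colsp_mul spV (colsp_G q S)) spW) _.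
by rewrite muln1 expnS mulnC.
Qed.


Lemma hadn_sym n (x y : bits n) : hadn C x y = hadn C y x.
Proof. by rewrite /hadn; apply: eq_bigr => i _; rewrite /hadamard_entry andbC. Qed.

Lemma hadn2 n (x y : bits n) : \sum_z hadn C x z * hadn C z y = (x == y)%:R.
Proof.
rewrite /hadn.
under eq_bigr => z _ do rewrite -big_split /=.
rewrite -(bigA_distr_bigA (fun i b => hadamard_entry C (x i) b * hadamard_entry C b (y i))) /=.
under eq_bigr => i _ do rewrite big_bool /= addrC hh.
case: (eqVneq x y) => [->|ne].
  by rewrite big1 // => i _; rewrite eqxx.
have [i Hi] : exists i, x i != y i.
  apply/existsP; apply: contraR ne => /existsPn H; apply/eqP/ffunP => i.
  by apply/eqP; move: (H i); rewrite negbK.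
by rewrite (bigD1 i) //= (negbTE Hi) mul0r.
Qed.

Lemma hadn_neq0 n (x y : bits n) : hadn C x y != 0.
Proof.
apply/prodf_neq0 => i _; rewrite /hadamard_entry mulf_neq0 ?signr_eq0 //.
by rewrite invr_eq0 sqrtC_eq0 pnatr_eq0.
Qed.

Lemma gram (I J : finType) (a : I -> J -> C) (c : I -> C) p0 :
  c p0 != 0 -> (forall p q, \sum_f a p f * (a q f)^* = c p * (c q)^*) ->
  forall p f, a p f = c p * (a p0 f / c p0).
Proof.
move=> c0 H p.
have c0' : (c p0)^* != 0 by rewrite conjC_eq0.
pose d := fun f => a p f - c p * (a p0 f / c p0).
have E : forall f, d f * (d f)^* = a p f * (a p f)^*
   + (- ((c p)^* / (c p0)^*)) * (a p f * (a p0 f)^*)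
   + (- (c p / c p0)) * (a p0 f * (a p f)^*)
   + (c p * (c p)^* / (c p0 * (c p0)^*)) * (a p0 f * (a p0 f)^*).
  move=> f; rewrite /d rmorphB rmorphM fmorph_div /=; field; exact/andP.
have S0 : \sum_f d f * (d f)^* = 0.
  rewrite (eq_bigr _ (fun f _ => E f)) !big_split /= -!mulr_sumr !H.
  field; exact/andP.
move=> f; apply/eqP; rewrite -subr_eq0 -mul_conjC_eq0; apply/eqP.
apply: (psumr_eq0P _ S0) => // g _.
by rewrite -normCK exprn_ge0 ?normr_ge0.
Qed.


Definition delta n (x1 x2 : bits n) : op C (bits n) :=
  fun a b => (a == x1)%:R * (b == x2)%:R.

Definition Wf n m (U : op C (qreg n m)) (g : bits m -> C) (x1 : bits n) (p : qreg n m) :=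
  \sum_e U p (x1, e) * g e.

Lemma hadn_chan_delta n (x1 x2 x y : bits n) :
  hadn_channel (delta x1 x2) x y = hadn C x x1 * (hadn C y x2)^*.
Proof.
rewrite /hadn_channel /mulop /adj /delta.
rewrite (eq_bigr (fun z => (z == x1)%:R * (hadn C x z * (hadn C y x2)^*))).
  by rewrite sum_delta.
move=> z _.
rewrite (eq_bigr (fun w => (w == x2)%:R * ((z == x1)%:R * (hadn C y w)^*))).
  by rewrite sum_delta; ring.
by move=> w _; ring.
Qed.

Lemma chan_delta n m (U : op C (qreg n m)) g (x1 x2 x y : bits n) :
  channel U g (delta x1 x2) x y = \sum_f Wf U g x1 (x, f) * (Wf U g x2 (y, f))^*.
Proof.
rewrite /channel /ptrace2 /mulop /tens_op /proj /adj /delta /Wf.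
apply: eq_bigr => f _.
rewrite (eq_bigr (fun z => (z.1 == x1)%:R * (U (x, f) z * g z.2) *
           (\sum_e U (y, f) (x2, e) * g e)^*)); last first.
  move=> z _; rewrite sum_pair.
  rewrite (eq_bigr (fun a => (a == x2)%:R * \sum_e (z.1 == x1)%:R * g z.2 *
         ((g e)^* * (U (y, f) (a, e))^*))).
    rewrite sum_delta rmorph_sum !mulr_sumr; apply: eq_bigr => e _.
    by rewrite rmorphM /=; ring.
  move=> a _; rewrite !mulr_sumr; apply: eq_bigr => e _ /=; ring.
rewrite -mulr_suml sum_pair.
congr (_ * _).
rewrite (eq_bigr (fun a => (a == x1)%:R * \sum_e U (x, f) (a, e) * g e)).
  by rewrite sum_delta.
by move=> a _; rewrite mulr_sumr; apply: eq_bigr => e _ /=; ring.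
Qed.

End Aux.

Theorem theorem3 (C : numClosedFieldType) (n k : nat) :
  (k < n)%N ->
  ~ exists (m : nat) (U : op C (qreg n m)) (g : bits m -> C),
      @circuit C n m k U /\ normalized g /\
      (forall (rho : op C (bits n)) (x y : bits n),
          channel U g rho x y = hadn_channel rho x y).
Proof.
move=> kn [m [U [g [circ [norm Hch]]]]].
have [spU [V [hV spV]]] := circuit_sp circ.
have hV' : forall a b, \sum_z V a z * U z b = (a == b)%:R.
  by move=> a b; move: hV => /(congr1 (fun M => M a b)).
pose x0 : bits n := [ffun => false].
pose a := fun (p : bits n * bits n) f => Wf U g p.1 (p.2, f).
pose c := fun (p : bits n * bits n) => hadn C p.2 p.1.
have Hgram : forall p q, \sum_f a p f * (a q f)^* = c p * (c q)^*.
  by move=> [x1 x] [x2 y]; rewrite /a /c /= -chan_delta Hch hadn_chan_delta.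
have Wfact := @gram C _ _ a c (x0, x0) (hadn_neq0 _ _ _) Hgram.
pose phi f := a (x0, x0) f / c (x0, x0).
have HW : forall x1 y f, Wf U g x1 (y, f) = hadn C y x1 * phi f.
  by move=> x1 y f; exact: (Wfact (x1, y) f).
pose F := [set f | phi f != 0].
pose Gs := [set e | g e != 0].
have F0 : (0 < #|F|)%N.
  have [f Hf] : exists f, phi f != 0.
    case: (pickP (fun f => phi f != 0)) => [f Hf|H]; first by exists f.
    have := Hgram (x0, x0) (x0, x0).
    rewrite big1 => [/esym/eqP|f _]; first by rewrite mul_conjC_eq0 (negbTE (hadn_neq0 _ _ _)).
    move: (H f) => /negbFE /eqP phi0.
    by rewrite /a (HW x0 x0 f) phi0 !mulr0 mul0r.
  by rewrite card_gt0; apply/set0Pn; exists f; rewrite inE.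
have G0 : (0 < #|Gs|)%N.
  have [e He] : exists e, g e != 0.
    case: (pickP (fun e => g e != 0)) => [e He|H]; first by exists e.
    move: norm; rewrite /normalized big1 => [/eqP|e _]; first by rewrite eq_sym oner_eq0.
    by move: (H e) => /negbFE /eqP ->; rewrite normr0 expr0n.
  by rewrite card_gt0; apply/set0Pn; exists e; rewrite inE.
have cardX : forall (B : {set bits m}), #|setX [set: bits n] B| = (2 ^ n * #|B|)%N.
  by move=> B; rewrite cardsX cardsT card_ffun card_bool card_ord.
have I1 : (2 ^ n * #|F| <= #|Gs| * 2 ^ k)%N.
  have sub : setX [set: bits n] F \subset \bigcup_(e in Gs) supp U (x0, e).
    apply/subsetP => -[y f]; rewrite !inE /= => hf.
    have : Wf U g x0 (y, f) != 0 by rewrite HW mulf_neq0 // hadn_neq0.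
    rewrite /Wf => nz; apply: contraR nz => H; rewrite big1 // => e _.
    case: (eqVneq (g e) 0) => [->|ge]; first by rewrite mulr0.
    case: (eqVneq (U (y, f) (x0, e)) 0) => [->|ue]; first by rewrite mul0r.
    by case/negP: H; apply/bigcupP; exists e; rewrite inE.
  rewrite -cardX; apply: leq_trans (subset_leq_card sub) _.
  apply: leq_trans (card_bigcup_le _ _) _.
  apply: (@leq_trans (\sum_(e in Gs) 2 ^ k)); first by apply: leq_sum => e _; apply: spU.
  by rewrite sum_nat_const.
have key : forall x' e, hadn C x' x0 * g e = \sum_f V (x', e) (x0, f) * phi f.
  move=> x' e.
  have L1 : forall x1, \sum_p V (x', e) p * Wf U g x1 p = (x' == x1)%:R * g e.
    move=> x1; rewrite /Wf.
    under eq_bigr => p _ do rewrite mulr_sumr.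
    rewrite exchange_big /=.
    rewrite (eq_bigr (fun e' => ((x', e) == (x1, e'))%:R * g e')); last first.
      by move=> e' _; rewrite -hV' mulr_suml; apply: eq_bigr => p _; rewrite mulrA.
    case: (eqVneq x' x1) => [<-|ne].
      rewrite (eq_bigr (fun e' => (e == e')%:R * g e')) ?sum_delta' ?mul1r //.
      by move=> e' _; rewrite xpair_eqE eqxx.
    rewrite big1 /=; first by rewrite mul0r.
    move=> e' _.
    by rewrite xpair_eqE (negbTE ne) mul0r.
  have L2 : \sum_x1 hadn C x1 x0 * \sum_p V (x', e) p * Wf U g x1 p = hadn C x' x0 * g e.
    under eq_bigr => x1 _ do rewrite L1.
    rewrite (eq_bigr (fun x1 => (x' == x1)%:R * (hadn C x1 x0 * g e))) ?sum_delta' //.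
    by move=> x1 _; rewrite mulrCA.
  rewrite -L2.
  rewrite (eq_bigr (fun x1 => \sum_p hadn C x1 x0 * (V (x', e) p * Wf U g x1 p))); last first.
    by move=> x1 _; rewrite mulr_sumr.
  rewrite exchange_big sum_pair /=.
  rewrite (eq_bigr (fun y => (y == x0)%:R * \sum_f V (x', e) (y, f) * phi f)) ?sum_delta //.
  move=> y _; rewrite mulr_sumr; apply: eq_bigr => f _.
  under eq_bigr => x1 _ do rewrite HW.
  rewrite (eq_bigr (fun x1 => hadn C y x1 * hadn C x1 x0 * (V (x', e) (y, f) * phi f))).
    by rewrite -mulr_suml hadn2.
  by move=> x1 _; ring.
have I2 : (2 ^ n * #|Gs| <= #|F| * 2 ^ k)%N.
  have sub : setX [set: bits n] Gs \subset \bigcup_(f in F) supp V (x0, f).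
    apply/subsetP => -[x' e]; rewrite !inE /= => he.
    have : hadn C x' x0 * g e != 0 by rewrite mulf_neq0 // hadn_neq0.
    rewrite key => nz; apply: contraR nz => H; rewrite big1 // => f _.
    case: (eqVneq (phi f) 0) => [->|pf]; first by rewrite mulr0.
    case: (eqVneq (V (x', e) (x0, f)) 0) => [->|vf]; first by rewrite mul0r.
    by case/negP: H; apply/bigcupP; exists f; rewrite inE.
  rewrite -cardX; apply: leq_trans (subset_leq_card sub) _.
  apply: leq_trans (card_bigcup_le _ _) _.
  apply: (@leq_trans (\sum_(f in F) 2 ^ k)); first by apply: leq_sum => f _; apply: spV.
  by rewrite sum_nat_const.
have KN : (2 ^ k < 2 ^ n)%N by rewrite ltn_exp2l.
move: I1 I2 KN F0 G0; set N := (2 ^ n)%N; set K := (2 ^ k)%N; set x := #|F|; set y := #|Gs|.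
move=> I1 I2 KN F0 G0.
have h1 : (N * x < N * y)%N.
  apply: leq_ltn_trans I1 _; rewrite mulnC ltn_pmul2r //.
have h2 : (N * y < N * x)%N.
  apply: leq_ltn_trans I2 _; rewrite mulnC ltn_pmul2r //.
by move: (ltn_trans h1 h2); rewrite ltnn.
Qed.
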